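(* Let $N, s \in \mathbb{N}$ with $\gcd(N, s) = 1$, and let $s'$ be the unique integer in $[1,N-1]$ with $s s'\equiv 1 \pmod N$. Let $H<P$ be natural numbers, and suppose $p_0 = sx_0 + 1$ (with $x_0$ an integer) is a divisor of $N$ lying in the interval $[P-H, P+H]$. Let $\tilde{P}$ be the unique integer in $[0,s-1]$ with $\tilde P\equiv P \pmod s$, and define $g(x) \in \mathbb{Z}[x]$ by $g(x) = x + c$, where $c$ is the unique integer in $[0,N-1]$ congruent to $s' + s'(P - \tilde{P})$ modulo $N$. Let $x' = x_0 - \frac{P - \tilde{P}}{s}$. Then: (1) $x'$ is an integer and $p_0 \mid g(x')$; (2) $|x'| \le H/s+1$. *)

(* Defs.v *)
From mathcomp Require Import all_boot all_order all_algebra.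
Set Implicit Arguments. Unset Strict Implicit. Unset Printing Implicit Defensive.

(* Main.v *)
Require Import Defs.
From mathcomp Require Import all_boot all_order all_algebra.
From mathcomp Require Import zify ring lra.
Import Order.TTheory GRing.Theory Num.Theory.
Local Open Scope ring_scope.

Theorem claim3p3 (N s H P : nat) (s' Ptil c x0 p0 : int) :
  coprime N s ->
  (1 <= s' <= N%:Z - 1) -> (s%:Z * s' == 1 %[mod N%:Z])%Z ->
  (H < P)%N ->
  p0 = s%:Z * x0 + 1 -> (p0 %| N%:Z)%Z ->
  P%:Z - H%:Z <= p0 <= P%:Z + H%:Z ->
  (0 <= Ptil <= s%:Z - 1) -> (Ptil == P%:Z %[mod s%:Z])%Z ->
  (0 <= c <= N%:Z - 1) -> (c == s' + s' * (P%:Z - Ptil) %[mod N%:Z])%Z ->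
  let g : {poly int} := 'X + c%:P in
  let x' : rat := x0%:~R - (P%:Z - Ptil)%:~R / s%:R in
  (exists z : int, z%:~R = x' /\ (p0 %| g.[z])%Z) /\
  `|x'| <= H%:R / s%:R + 1.
Proof.
move=> cNs /andP[s'1 s'2] hss' HP hp0 p0N /andP[pl pu] /andP[t1 t2] hPt
  /andP[c1 c2] hc g x'.
have s0 : (0 < s)%N.
  rewrite lt0n; apply/negP => /eqP s0; move: cNs; rewrite s0 /coprime gcdn0 => /eqP N1.
  rewrite N1 in s'2; lia.
move: hPt; rewrite eqz_mod_dvd => /dvdzP[k0 hk].
have [k sk] : exists k, P%:Z - Ptil = k * s%:Z.
  by exists (- k0); rewrite mulNr -hk opprB.
clear k0 hk.
have ex' : x' = (x0 - k)%:~R.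
  rewrite /x' sk intrM rmorphB /= mulfK //.
  by rewrite intr_eq0 -lt0n s0.
split.
  exists (x0 - k); split => //.
  rewrite /g hornerE hornerX hornerC.
  have cop : coprimez p0 s%:Z.
    rewrite coprimezE /=; apply: coprime_dvdl cNs; exact: p0N.
  rewrite -(Gauss_dvdzl _ cop).
  move: hss' hc; rewrite !eqz_mod_dvd => h1 h2.
  have -> : (x0 - k + c) * s%:Z =
     p0 + s%:Z * (c - (s' + s' * (P%:Z - Ptil))) + (s%:Z * s' - 1) * (1 + s%:Z * k).
    rewrite hp0 sk; ring.
  apply: rpredD; first apply: rpredD.
  - exact: dvdzz.
  - by rewrite dvdz_mull //; exact: dvdz_trans p0N h2.
  - by rewrite dvdz_mulr //; exact: dvdz_trans p0N h1.
rewrite ex'.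
have e : (x0 - k) * s%:Z = p0 - 1 - (P%:Z - Ptil) by rewrite hp0 sk; ring.
have hb : `|(x0 - k) * s%:Z| <= H%:Z + s%:Z.
  rewrite e ler_norml; clear -pl pu t1 t2; apply/andP; split; lia.
have sp : (0 : rat) < s%:R by rewrite ltr0n.
have -> : (H%:R / s%:R + 1 : rat) = (H%:R + s%:R) / s%:R.
  by field; rewrite gt_eqF.
rewrite ler_pdivlMr //.
have := hb; rewrite -(ler_int rat) intr_norm intrM !rmorphD /= normrM.
rewrite -[(s%:~R : rat)]/(s%:R : rat) normr_nat.
by [].
Qed.
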